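(* For a nonnegative matrix $M\in\mathbb{R}_+^{p\times q}$ the following statements are pairwise equivalent: (i) $M$ is a slack matrix of a polyhedral cone; (ii) $M$ satisfies the RCGC, i.e., $\{x^TM : x\in\mathbb{R}_+^p\}=\{x^TM: x\in\mathbb{R}^p\}\cap\mathbb{R}_+^q$; (iii) $M$ satisfies the CCGC, i.e., $\{Mz: z\in\mathbb{R}_+^q\}=\{Mz: z\in\mathbb{R}^q\}\cap\mathbb{R}_+^p$.
   Context: A matrix $S\in\mathbb{R}^{p\times q}$ is a slack matrix of a polyhedral cone $K\subseteq\mathbb{R}^n$ if there are matrices $A\in\mathbb{R}^{p\times n}$ and $B\in\mathbb{R}^{n\times q}$ with $K=\{x\in\mathbb{R}^n: x^TB\ge 0\}=\{y^TA: y\in\mathbb{R}_+^p\}$ and $S=AB$. A matrix is a slack matrix of a polyhedral cone if it is a slack matrix of some polyhedral cone. *)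

(* Defs.v *)
From mathcomp Require Import all_boot all_order all_algebra.
Set Implicit Arguments. Unset Strict Implicit. Unset Printing Implicit Defensive.
Import Order.TTheory GRing.Theory Num.Theory.
Local Open Scope ring_scope.

Definition nonneg_mx (R : realFieldType) (m n : nat) (M : 'M[R]_(m, n)) : Prop :=
  forall i j, 0 <= M i j.

(* S is a slack matrix of the polyhedral cone K = {x : x^T B >= 0} = {y^T A : y >= 0}
   in R^n, for some n, A, B with S = A B. Points of R^n are row vectors. *)
Definition slack_matrix_of_cone (R : realFieldType) (p q : nat) (S : 'M[R]_(p, q)) : Prop :=
  exists (n : nat) (A : 'M[R]_(p, n)) (B : 'M[R]_(n, q)),
    (forall x : 'rV[R]_n,
        nonneg_mx (x *m B) <-> exists y : 'rV[R]_p, nonneg_mx y /\ x = y *m A)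
    /\ S = A *m B.

Definition RCGC (R : realFieldType) (p q : nat) (M : 'M[R]_(p, q)) : Prop :=
  forall v : 'rV[R]_q,
    (exists x : 'rV[R]_p, nonneg_mx x /\ v = x *m M) <->
    ((exists x : 'rV[R]_p, v = x *m M) /\ nonneg_mx v).

Definition CCGC (R : realFieldType) (p q : nat) (M : 'M[R]_(p, q)) : Prop :=
  forall v : 'cV[R]_p,
    (exists z : 'cV[R]_q, nonneg_mx z /\ v = M *m z) <->
    ((exists z : 'cV[R]_q, v = M *m z) /\ nonneg_mx v).

(* Main.v *)
Require Import Defs.
From mathcomp Require Import all_boot all_order all_algebra.
From mathcomp Require Import ring lra.
Set Implicit Arguments. Unset Strict Implicit. Unset Printing Implicit Defensive.
Import Order.TTheory GRing.Theory Num.Theory.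
Local Open Scope ring_scope.

Definition dotv (R : realFieldType) p (y : 'rV[R]_p) (v : 'cV[R]_p) : R := (y *m v) 0 0.

Fixpoint conev (R : realFieldType) p (s : seq 'cV[R]_p) (b : 'cV[R]_p) : Prop :=
  match s with
  | [::] => b = 0
  | a :: s' => exists mu : R, 0 <= mu /\ conev s' (b - mu *: a)
  end.

Lemma dotBl (R : realFieldType) p (u w : 'rV[R]_p) (r : R) v :
  dotv (u - r *: w) v = dotv u v - r * dotv w v.
Proof. by rewrite /dotv mulmxBl -scalemxAl !mxE. Qed.

Lemma dotBr (R : realFieldType) p (u : 'rV[R]_p) (r : R) v w :
  dotv u (v - r *: w) = dotv u v - r * dotv u w.
Proof. by rewrite /dotv mulmxBr -scalemxAr !mxE. Qed.

Lemma cone_shift (R : realFieldType) p (a : 'cV[R]_p) (k : 'cV[R]_p -> R) (s : seq 'cV[R]_p) :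
  (forall x, x \in s -> k x <= 0) ->
  forall b, conev [seq x - k x *: a | x <- s] b ->
  exists t, t <= 0 /\ conev s (b + t *: a).
Proof.
elim: s => [|x s IH] hk b /=.
  by move=> ->; exists 0; rewrite scale0r addr0.
case=> mu [hmu hc].
have hk' : forall y, y \in s -> k y <= 0 by move=> y hy; apply: hk; rewrite in_cons hy orbT.
have [t [ht hc']] := IH hk' _ hc.
have hkx : k x <= 0 by apply: hk; rewrite in_cons eqxx.
exists (t + mu * k x); split.
  have := mulr_ge0_le0 hmu hkx; lra.
exists mu; split => //.
have -> : b + (t + mu * k x) *: a - mu *: x = b - mu *: (x - k x *: a) + t *: a.
  by apply/matrixP => i j; rewrite !mxE; ring.
exact: hc'.
Qed.

Lemma farkas_n (R : realFieldType) p n : forall (s : seq 'cV[R]_p), size s = n ->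
  forall b, conev s b \/
  exists y : 'rV[R]_p, (forall a, a \in s -> 0 <= dotv y a) /\ dotv y b < 0.
Proof.
elim: n => [|n IH] s hs b; case: s hs => [|a s] //= hs.
- have [->|bn0] := eqVneq b 0; first by left.
  right; exists (- b^T); split => //.
  have [i hi] : exists i, b i 0 != 0.
    apply/existsP; apply: contraT; rewrite negb_exists => /forallP h.
    rewrite -(negbTE bn0); apply/eqP/matrixP => i j; rewrite ord1 mxE.
    by have := h i; rewrite negbK => /eqP.
  rewrite /dotv mulNmx mxE oppr_lt0 mxE (bigD1 i) //=.
  apply: ltr_pwDl.
    rewrite !mxE lt0r mulf_neq0 //= -expr2; exact: sqr_ge0.
  apply: sumr_ge0 => k _; rewrite !mxE -expr2; exact: sqr_ge0.
- case: hs => hs.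
  have [hc|[y [hy hyb]]] := IH s hs b.
    by left; exists 0; rewrite scale0r subr0.
  have [hya|hya] := lerP 0 (dotv y a).
    right; exists y; split => // a'; rewrite in_cons => /orP [/eqP -> //|]; exact: hy.
  set ya := dotv y a in hya.
  have ya0 : ya != 0 by rewrite ltr0_neq0.
  set k := fun x => dotv y x / ya.
  have hk : forall x, x \in s -> k x <= 0.
    move=> x hx; rewrite /k; apply: mulr_ge0_le0; first exact: hy.
    by rewrite invr_le0 ltW.
  have [hc|[y' [hy' hyb']]] :=
     IH [seq x - k x *: a | x <- s] (etrans (size_map _ _) hs) (b - k b *: a).
  + have [t [ht hct]] := cone_shift hk hc.
    left; exists (k b - t); split.
      have : 0 < k b by rewrite /k -mulrNN -invrN divr_gt0 // oppr_gt0.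
      lra.
    have -> : b - (k b - t) *: a = b - k b *: a + t *: a.
      by apply/matrixP => i j; rewrite !mxE; ring.
    exact: hct.
  + right; exists (y' - (dotv y' a / ya) *: y); split.
      move=> a'; rewrite in_cons => /orP [/eqP ->|ha'].
        by rewrite dotBl -/ya mulrVK ?subrr ?unitfE.
      have := hy' _ (map_f (fun x => x - k x *: a) ha').
      rewrite dotBl dotBr /k.
      suff -> : dotv y' a' - dotv y a' / ya * dotv y' a =
               dotv y' a' - dotv y' a / ya * dotv y a' by [].
      by ring.
    move: hyb'; rewrite dotBl dotBr /k.
    suff -> : dotv y' b - dotv y b / ya * dotv y' a =
             dotv y' b - dotv y' a / ya * dotv y b by [].
    by ring.
Qed.

Lemma farkas (R : realFieldType) p (s : seq 'cV[R]_p) b : conev s b \/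
  exists y : 'rV[R]_p, (forall a, a \in s -> 0 <= dotv y a) /\ dotv y b < 0.
Proof. exact: (@farkas_n R p (size s) s erefl b). Qed.

Lemma cone_cols (R : realFieldType) p q (M : 'M[R]_(p, q)) (r : seq 'I_q) :
  forall b, conev [seq col j M | j <- r] b -> exists z, nonneg_mx z /\ b = M *m z.
Proof.
elim: r => [|j r IH] b /=.
  by move=> ->; exists 0; split; [move=> i k; rewrite mxE | rewrite mulmx0].
case=> mu [hmu /IH [z [hz hb]]].
exists (z + mu *: delta_mx j 0); split.
  move=> i k; rewrite !mxE; apply: addr_ge0 => //; apply: mulr_ge0 => //; exact: ler0n.
by rewrite mulmxDr -scalemxAr -colE -hb subrK.
Qed.

Lemma nonneg_mul (R : realFieldType) m n k (A : 'M[R]_(m, n)) (B : 'M[R]_(n, k)) :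
  nonneg_mx A -> nonneg_mx B -> nonneg_mx (A *m B).
Proof.
move=> hA hB i j; rewrite mxE; apply: sumr_ge0 => l _; exact: mulr_ge0.
Qed.

Lemma RCGC_CCGC (R : realFieldType) p q (M : 'M[R]_(p, q)) :
  nonneg_mx M -> RCGC M -> CCGC M.
Proof.
move=> hM hR v; split.
  by case=> z [hz ->]; split; [exists z | exact: nonneg_mul].
case=> [[z hv] hv0].
have [hc|[y [hy hyb]]] := farkas [seq col j M | j <- enum 'I_q] v.
  exact: cone_cols hc.
have hyM : nonneg_mx (y *m M).
  move=> i j; rewrite ord1.
  have := hy _ (map_f (fun j => col j M) (mem_enum _ j)).
  rewrite /dotv !mxE => h; apply: (le_trans h); rewrite le_eqVlt; apply/orP; left.
  by apply/eqP; apply: eq_bigr => k _; rewrite !mxE.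
have [x [hx hxy]] := (proj2 (hR (y *m M))) (conj (ex_intro _ y erefl) hyM).
move: hyb; rewrite /dotv hv mulmxA hxy -mulmxA -hv.
have := nonneg_mul hx hv0 0 0; lra.
Qed.

Lemma CCGC_RCGC_tr (R : realFieldType) p q (M : 'M[R]_(p, q)) :
  nonneg_mx M -> CCGC M -> RCGC M^T.
Proof.
move=> hM hC v; have := hC v^T; case=> h1 h2; split.
  by case=> x [hx ->]; split; [exists x | apply: nonneg_mul => // i j; rewrite mxE].
case=> [[x hx] hv].
have [|z [hz hz2]] := h2.
  split; first by exists x^T; rewrite hx trmx_mul trmxK.
  by move=> i j; rewrite mxE.
exists z^T; split; first by move=> i j; rewrite mxE.
by rewrite -[v]trmxK hz2 trmx_mul.
Qed.

Lemma slack_RCGC (R : realFieldType) p q (M : 'M[R]_(p, q)) :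
  nonneg_mx M -> (slack_matrix_of_cone M <-> RCGC M).
Proof.
move=> hM; split.
  case=> n [A [B [hK eM]]] v; rewrite eM in hM *; split.
    case=> x [hx ->]; split.
    exists x. done. apply: nonneg_mul => //.
  move=> [[x ->] hv].
  have hxA : nonneg_mx ((x *m A) *m B) by rewrite -mulmxA.
  have [y [hy hxy]] := (proj1 (hK (x *m A))) hxA.
  by exists y; split => //; rewrite mulmxA hxy mulmxA.
move=> hR.
exists (\rank M), (col_base M), (row_base M); split; last by rewrite mulmx_base.
move=> x; split; last first.
  by case=> y [hy ->]; rewrite -mulmxA mulmx_base; apply: nonneg_mul.
move=> hx.
have [C hC] := row_fullP (col_base_full M).
have [D hD] := row_freeP (row_base_free M).
have hw : (x *m C) *m M = x *m row_base M.
  transitivity (x *m C *m (col_base M *m row_base M)); first by rewrite mulmx_base.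
  by rewrite -mulmxA (mulmxA C) hC mul1mx.
have hxC : nonneg_mx ((x *m C) *m M) by rewrite hw.
have [y [hy hyM]] := (proj2 (hR ((x *m C) *m M))) (conj (ex_intro _ _ erefl) hxC).
exists y; split => //.
transitivity (x *m (row_base M *m D)); first by rewrite hD mulmx1.
rewrite mulmxA -hw hyM.
transitivity (y *m (col_base M *m row_base M) *m D); first by rewrite mulmx_base.
by rewrite -mulmxA -mulmxA hD mulmx1.
Qed.

Theorem corollary2p4 (R : realFieldType) (p q : nat) (M : 'M[R]_(p, q)) :
  nonneg_mx M ->
  (slack_matrix_of_cone M <-> RCGC M) /\ (RCGC M <-> CCGC M) /\
  (slack_matrix_of_cone M <-> CCGC M).
Proof.
move=> hM.
have hMT : nonneg_mx M^T by move=> i j; rewrite mxE.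
have e1 : RCGC M <-> CCGC M.
  split; first exact: RCGC_CCGC.
  move=> hC.
  have hMTT : nonneg_mx M^T^T by rewrite trmxK.
  have := CCGC_RCGC_tr hMT (RCGC_CCGC hMT (CCGC_RCGC_tr hM hC)).
  by rewrite trmxK.
have e0 := slack_RCGC hM.
split => //; split => //; split => h; [apply/e1/e0 | apply/e0/e1] => //.
Qed.
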